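(* Let $G=G_2$ and $K=SU(3)\subseteq G_2$. For $X,Y\in\mathfrak p\subseteq\mathfrak g_2$, $[X,Y]=0$ if and only if $[X,Y]_{\mathfrak k}=0$.
   Context: $G_2=\operatorname{Aut}(\mathbb{O})\subseteq SO(7)$ is the automorphism group of the octonions acting on $\operatorname{Im}\mathbb{O}$, and $K=\{g\in G_2: g(i)=i\}\cong SU(3)$ for a fixed unit imaginary octonion $i$. Let $\mathfrak g=\mathfrak g_2$ and $\mathfrak k$ be their Lie algebras, $\langle X,Y\rangle_0=-\operatorname{tr}(XY)$, $\mathfrak p$ the $\langle\cdot,\cdot\rangle_0$-orthogonal complement of $\mathfrak k$ in $\mathfrak g$, and $X=X_{\mathfrak k}+X_{\mathfrak p}$ the corresponding decomposition. *)

(* Defs.v *)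
From HB Require Import structures.
From mathcomp Require Import all_boot all_order all_algebra.
Set Implicit Arguments. Unset Strict Implicit. Unset Printing Implicit Defensive.
Import Order.TTheory GRing.Theory Num.Theory.
Local Open Scope ring_scope.

(* Im O = R^7 with orthonormal basis e_0..e_6 (0-indexed version of the
   standard octonion units e1..e7).  Multiplication table (Fano plane):
   e_i e_j = e_k for the oriented triples below and their cyclic rotations;
   for imaginary u v:  u v = - <u,v> 1 + u x v  with the cross product x. *)
Definition fano_triples : seq (nat * nat * nat) :=
  [:: (0,1,2); (0,3,4); (0,6,5); (1,3,5); (1,4,6); (2,3,6); (2,5,4)]%N.

Definition fano_pos (i j k : nat) : bool :=
  has (fun t => (t == (i,j,k)) || (t == (j,k,i)) || (t == (k,i,j))) fano_triples.

Definition oct_eps {R : ringType} (i j k : 'I_7) : R :=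
  if fano_pos i j k then 1 else if fano_pos j i k then -1 else 0.

Definition cross {R : ringType} (u v : 'cV[R]_7) : 'cV[R]_7 :=
  \col_k (\sum_(i < 7) \sum_(j < 7) oct_eps i j k * u i 0 * v j 0).

Definition oct_i {R : ringType} : 'cV[R]_7 := delta_mx 0 0.

(* g2 = Lie algebra of G2 = Aut(O) acting on Im O: skew endomorphisms of Im O
   (i.e. elements of so(7)) that are derivations of the octonion product,
   equivalently of the cross product on Im O. *)
Definition in_g2 {R : ringType} (X : 'M[R]_7) : Prop :=
  X^T = - X /\
  forall u v : 'cV[R]_7, X *m cross u v = cross (X *m u) v + cross u (X *m v).

(* k = Lie algebra of K = stabilizer of i in G2 (= su(3)) *)
Definition in_k {R : ringType} (X : 'M[R]_7) : Prop :=
  in_g2 X /\ X *m oct_i = 0.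

Definition ip0 {R : ringType} (X Y : 'M[R]_7) : R := - \tr (X *m Y).

Definition in_p {R : ringType} (X : 'M[R]_7) : Prop :=
  in_g2 X /\ forall W, in_k W -> ip0 X W = 0.

Definition lie {R : ringType} (X Y : 'M[R]_7) : 'M[R]_7 := X *m Y - Y *m X.

(* "Z_k = 0" for the decomposition Z = Z_k + Z_p, Z_k in k, Z_p in p. *)
Definition kcomp_zero {R : ringType} (Z : 'M[R]_7) : Prop :=
  forall A B : 'M[R]_7, in_k A -> in_p B -> Z = A + B -> A = 0.

(* Main.v *)
Require Import Defs.
From HB Require Import structures.
From mathcomp Require Import all_boot all_order all_algebra.
From mathcomp Require Import ring lra.
Import GRing.Theory Num.Theory.
Local Open Scope ring_scope.

Set Implicit Arguments. Unset Strict Implicit. Unset Printing Implicit Defensive.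


Definition o0 : 'I_7 := @Ordinal 7 0 isT.
Definition o1 : 'I_7 := @Ordinal 7 1 isT.
Definition o2 : 'I_7 := @Ordinal 7 2 isT.
Definition o3 : 'I_7 := @Ordinal 7 3 isT.
Definition o4 : 'I_7 := @Ordinal 7 4 isT.
Definition o5 : 'I_7 := @Ordinal 7 5 isT.
Definition o6 : 'I_7 := @Ordinal 7 6 isT.

Lemma ord7P (i : 'I_7) :
  i = o0 \/ i = o1 \/ i = o2 \/ i = o3 \/ i = o4 \/ i = o5 \/ i = o6.
Proof.
case: i => [[|[|[|[|[|[|[|k]]]]]]] Hk].
all: try by [].
all: do ?[by left; apply: val_inj | right].
by apply: val_inj.
Qed.

Lemma sum7 (V : nmodType) (F : 'I_7 -> V) :
  \sum_(i < 7) F i = F o0 + F o1 + F o2 + F o3 + F o4 + F o5 + F o6.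
Proof.
rewrite !big_ord_recr big_ord0 /= ?add0r.
by repeat congr (_ + _); congr F; apply: val_inj.
Qed.

Lemma ord1E (j : 'I_1) : j = 0.
Proof. by rewrite ord1. Qed.

Definition gent {R : ringType} (X : 'M[R]_7) (i j : nat) : R :=
    match i, j with
  | 0, 1 => - X o5 o4 + X o6 o3 | 0, 2 => - X o5 o3 - X o6 o4 | 0, 3 => X o5 o2 - X o6 o1
  | 0, 4 => X o5 o1 + X o6 o2 | 0, 5 => - X o5 o0 | 0, 6 => - X o6 o0
  | 1, 0 => X o5 o4 - X o6 o3 | 1, 2 => X o4 o3 - X o6 o5 | 1, 3 => - X o4 o2 + X o6 o0
  | 1, 4 => - X o4 o1 | 1, 5 => - X o5 o1 | 1, 6 => - X o6 o1
  | 2, 0 => X o5 o3 + X o6 o4 | 2, 1 => - X o4 o3 + X o6 o5 | 2, 3 => X o4 o1 - X o5 o0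
  | 2, 4 => - X o4 o2 | 2, 5 => - X o5 o2 | 2, 6 => - X o6 o2
  | 3, 0 => - X o5 o2 + X o6 o1 | 3, 1 => X o4 o2 - X o6 o0 | 3, 2 => - X o4 o1 + X o5 o0
  | 3, 4 => - X o4 o3 | 3, 5 => - X o5 o3 | 3, 6 => - X o6 o3
  | 4, 0 => - X o5 o1 - X o6 o2 | 4, 1 => X o4 o1 | 4, 2 => X o4 o2 | 4, 3 => X o4 o3
  | 4, 5 => - X o5 o4 | 4, 6 => - X o6 o4
  | 5, 0 => X o5 o0 | 5, 1 => X o5 o1 | 5, 2 => X o5 o2 | 5, 3 => X o5 o3 | 5, 4 => X o5 o4
  | 5, 6 => - X o6 o5
  | 6, 0 => X o6 o0 | 6, 1 => X o6 o1 | 6, 2 => X o6 o2 | 6, 3 => X o6 o3 | 6, 4 => X o6 o4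
  | 6, 5 => X o6 o5
  | _, _ => 0
  end.

Definition Gm {R : ringType} (X : 'M[R]_7) : 'M[R]_7 :=
  \matrix_(i, j) gent X i j.


Lemma g2_Gm_skew (R : ringType) (X : 'M[R]_7) : (Gm X)^T = - Gm X.
Proof.
apply/matrixP => i j; rewrite !mxE.
by case: (ord7P i) => [->|[->|[->|[->|[->|[->|->]]]]]]; case: (ord7P j) => [->|[->|[->|[->|[->|[->|->]]]]]]; rewrite /gent /=;
  rewrite ?opprK ?oppr0 ?opprD ?opprK.
Qed.


Definition crf {R : ringType} (U V : 'I_7 -> R) (k : nat) : R :=
  match k with
  | 0 => (U o1 * V o2 - U o2 * V o1) + (U o3 * V o4 - U o4 * V o3) - (U o5 * V o6 - U o6 * V o5)
  | 1 => -(U o0 * V o2 - U o2 * V o0) + (U o3 * V o5 - U o5 * V o3) + (U o4 * V o6 - U o6 * V o4)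
  | 2 => (U o0 * V o1 - U o1 * V o0) + (U o3 * V o6 - U o6 * V o3) - (U o4 * V o5 - U o5 * V o4)
  | 3 => -(U o0 * V o4 - U o4 * V o0) - (U o1 * V o5 - U o5 * V o1) - (U o2 * V o6 - U o6 * V o2)
  | 4 => (U o0 * V o3 - U o3 * V o0) - (U o1 * V o6 - U o6 * V o1) + (U o2 * V o5 - U o5 * V o2)
  | 5 => (U o0 * V o6 - U o6 * V o0) + (U o1 * V o3 - U o3 * V o1) - (U o2 * V o4 - U o4 * V o2)
  | _ => -(U o0 * V o5 - U o5 * V o0) + (U o1 * V o4 - U o4 * V o1) + (U o2 * V o3 - U o3 * V o2)
  end.

Lemma crossE (R : rcfType) (u v : 'cV[R]_7) (k : 'I_7) :
  cross u v k 0 = crf (fun i => u i 0) (fun i => v i 0) k.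
Proof.
rewrite mxE !sum7 /oct_eps /=.
case: (ord7P k) => [->|[->|[->|[->|[->|[->|->]]]]]] /=; ring.
Qed.

Lemma g2_Gm_der (R : rcfType) (X : 'M[R]_7) (u v : 'cV[R]_7) :
  Gm X *m cross u v = cross (Gm X *m u) v + cross u (Gm X *m v).
Proof.
apply/matrixP => i j; rewrite (ord1E j).
rewrite [LHS]mxE sum7 !crossE [RHS]mxE !crossE.
case: (ord7P i) => [->|[->|[->|[->|[->|[->|->]]]]]] /=;
  rewrite !mxE !sum7 !mxE /gent /=; ring.
Qed.

Lemma der_entry (R : rcfType) (X : 'M[R]_7) (a b k : 'I_7) : in_g2 X ->
  (X *m cross (delta_mx a 0) (delta_mx b 0)) k 0 =
  (cross (X *m delta_mx a 0) (delta_mx b 0) + cross (delta_mx a 0) (X *m delta_mx b 0)) k 0.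
Proof. by move=> [_ H]; rewrite H. Qed.

Lemma skew_entry (R : rcfType) (X : 'M[R]_7) : X^T = - X -> forall i j, X i j = - X j i.
Proof. move=> H i j; have := congr1 (fun M : 'M[R]_7 => M j i) H; by rewrite !mxE => ->. Qed.

Lemma g2_char (R : rcfType) (X : 'M[R]_7) : in_g2 X -> X = Gm X.
Proof.
move=> HX; have sk := skew_entry HX.1.
have e0 := der_entry o0 o1 o3 HX.
rewrite [LHS]mxE sum7 !crossE [RHS]mxE !crossE /= !mxE !sum7 !mxE /= ?mulr0n ?mulr1n ?mul0r ?mulr0 ?mul1r ?mulr1 ?add0r ?addr0 ?subr0 ?sub0r ?oppr0 ?opprK in e0.
have e1 := der_entry o0 o1 o4 HX.
rewrite [LHS]mxE sum7 !crossE [RHS]mxE !crossE /= !mxE !sum7 !mxE /= ?mulr0n ?mulr1n ?mul0r ?mulr0 ?mul1r ?mulr1 ?add0r ?addr0 ?subr0 ?sub0r ?oppr0 ?opprK in e1.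
have e2 := der_entry o0 o1 o5 HX.
rewrite [LHS]mxE sum7 !crossE [RHS]mxE !crossE /= !mxE !sum7 !mxE /= ?mulr0n ?mulr1n ?mul0r ?mulr0 ?mul1r ?mulr1 ?add0r ?addr0 ?subr0 ?sub0r ?oppr0 ?opprK in e2.
have e3 := der_entry o0 o1 o6 HX.
rewrite [LHS]mxE sum7 !crossE [RHS]mxE !crossE /= !mxE !sum7 !mxE /= ?mulr0n ?mulr1n ?mul0r ?mulr0 ?mul1r ?mulr1 ?add0r ?addr0 ?subr0 ?sub0r ?oppr0 ?opprK in e3.
have e4 := der_entry o0 o3 o5 HX.
rewrite [LHS]mxE sum7 !crossE [RHS]mxE !crossE /= !mxE !sum7 !mxE /= ?mulr0n ?mulr1n ?mul0r ?mulr0 ?mul1r ?mulr1 ?add0r ?addr0 ?subr0 ?sub0r ?oppr0 ?opprK in e4.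
have e5 := der_entry o0 o3 o6 HX.
rewrite [LHS]mxE sum7 !crossE [RHS]mxE !crossE /= !mxE !sum7 !mxE /= ?mulr0n ?mulr1n ?mul0r ?mulr0 ?mul1r ?mulr1 ?add0r ?addr0 ?subr0 ?sub0r ?oppr0 ?opprK in e5.
have e6 := der_entry o1 o3 o6 HX.
rewrite [LHS]mxE sum7 !crossE [RHS]mxE !crossE /= !mxE !sum7 !mxE /= ?mulr0n ?mulr1n ?mul0r ?mulr0 ?mul1r ?mulr1 ?add0r ?addr0 ?subr0 ?sub0r ?oppr0 ?opprK in e6.
have s00 := sk o0 o0.
have s01 := sk o0 o1.
have s02 := sk o0 o2.
have s03 := sk o0 o3.
have s04 := sk o0 o4.
have s05 := sk o0 o5.
have s06 := sk o0 o6.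
have s11 := sk o1 o1.
have s12 := sk o1 o2.
have s13 := sk o1 o3.
have s14 := sk o1 o4.
have s15 := sk o1 o5.
have s16 := sk o1 o6.
have s22 := sk o2 o2.
have s23 := sk o2 o3.
have s24 := sk o2 o4.
have s25 := sk o2 o5.
have s26 := sk o2 o6.
have s33 := sk o3 o3.
have s34 := sk o3 o4.
have s35 := sk o3 o5.
have s36 := sk o3 o6.
have s44 := sk o4 o4.
have s45 := sk o4 o5.
have s46 := sk o4 o6.
have s55 := sk o5 o5.
have s56 := sk o5 o6.
have s66 := sk o6 o6.
apply/matrixP => i j; rewrite mxE.
case: (ord7P i) => [->|[->|[->|[->|[->|[->|->]]]]]];
  case: (ord7P j) => [->|[->|[->|[->|[->|[->|->]]]]]]; rewrite /gent /=; clear sk; first [done | lra].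
Qed.


Lemma crossDl (R : rcfType) (u1 u2 v : 'cV[R]_7) :
  cross (u1 + u2) v = cross u1 v + cross u2 v.
Proof.
apply/matrixP => i j; rewrite (ord1E j) [RHS]mxE !crossE.
case: (ord7P i) => [->|[->|[->|[->|[->|[->|->]]]]]] /=; rewrite !mxE; ring.
Qed.

Lemma crossDr (R : rcfType) (u v1 v2 : 'cV[R]_7) :
  cross u (v1 + v2) = cross u v1 + cross u v2.
Proof.
apply/matrixP => i j; rewrite (ord1E j) [RHS]mxE !crossE.
case: (ord7P i) => [->|[->|[->|[->|[->|[->|->]]]]]] /=; rewrite !mxE; ring.
Qed.

Lemma crossNl (R : rcfType) (u v : 'cV[R]_7) : cross (- u) v = - cross u v.
Proof.
apply/matrixP => i j; rewrite (ord1E j) [RHS]mxE !crossE.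
case: (ord7P i) => [->|[->|[->|[->|[->|[->|->]]]]]] /=; rewrite !mxE; ring.
Qed.

Lemma crossNr (R : rcfType) (u v : 'cV[R]_7) : cross u (- v) = - cross u v.
Proof.
apply/matrixP => i j; rewrite (ord1E j) [RHS]mxE !crossE.
case: (ord7P i) => [->|[->|[->|[->|[->|[->|->]]]]]] /=; rewrite !mxE; ring.
Qed.

Lemma crossBl (R : rcfType) (u1 u2 v : 'cV[R]_7) :
  cross (u1 - u2) v = cross u1 v - cross u2 v.
Proof. by rewrite crossDl crossNl. Qed.

Lemma crossBr (R : rcfType) (u v1 v2 : 'cV[R]_7) :
  cross u (v1 - v2) = cross u v1 - cross u v2.
Proof. by rewrite crossDr crossNr. Qed.

Ltac abs_cross := repeat (let x := fresh "x" in set x := cross _ _; clearbody x).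

Lemma in_g2_sub (R : rcfType) (X Y : 'M[R]_7) :
  in_g2 X -> in_g2 Y -> in_g2 (X - Y).
Proof.
move=> [sX dX] [sY dY]; split; first by rewrite linearB /= sX sY -opprD.
move=> u v; rewrite !mulmxBl dX dY crossBl crossBr.
abs_cross; apply/matrixP => i j; rewrite !mxE; ring.
Qed.

Lemma in_g2_lie (R : rcfType) (X Y : 'M[R]_7) :
  in_g2 X -> in_g2 Y -> in_g2 (lie X Y).
Proof.
move=> [sX dX] [sY dY]; split.
  by rewrite /lie linearB /= !trmx_mul sX sY !mulNmx !mulmxN !opprK opprB.
move=> u v; rewrite /lie !mulmxBl -!mulmxA !dY !dX !mulmxDr !dX !dY.
rewrite !crossBl !crossBr.
abs_cross; apply/matrixP => i j; rewrite !mxE; ring.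
Qed.

Definition pent {R : rcfType} (X : 'M[R]_7) (i j : nat) : R :=
  let w1 := X o1 o0 in let w2 := X o2 o0 in let w3 := X o3 o0 in
  let w4 := X o4 o0 in let w5 := X o5 o0 in let w6 := X o6 o0 in
  match i, j with
  | 0, 1 => - w1 | 0, 2 => - w2 | 0, 3 => - w3 | 0, 4 => - w4 | 0, 5 => - w5 | 0, 6 => - w6
  | 1, 0 => w1 | 1, 3 => w6 / 2 | 1, 4 => - (w5 / 2) | 1, 5 => w4 / 2 | 1, 6 => - (w3 / 2)
  | 2, 0 => w2 | 2, 3 => - (w5 / 2) | 2, 4 => - (w6 / 2) | 2, 5 => w3 / 2 | 2, 6 => w4 / 2
  | 3, 0 => w3 | 3, 1 => - (w6 / 2) | 3, 2 => w5 / 2 | 3, 5 => - (w2 / 2) | 3, 6 => w1 / 2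
  | 4, 0 => w4 | 4, 1 => w5 / 2 | 4, 2 => w6 / 2 | 4, 5 => - (w1 / 2) | 4, 6 => - (w2 / 2)
  | 5, 0 => w5 | 5, 1 => - (w4 / 2) | 5, 2 => - (w3 / 2) | 5, 3 => w2 / 2 | 5, 4 => w1 / 2
  | 6, 0 => w6 | 6, 1 => w3 / 2 | 6, 2 => - (w4 / 2) | 6, 3 => - (w1 / 2) | 6, 4 => w2 / 2
  | _, _ => 0
  end.

Definition Pm {R : rcfType} (X : 'M[R]_7) : 'M[R]_7 := \matrix_(i, j) pent X i j.

Lemma Pm_Gm (R : rcfType) (X : 'M[R]_7) : Pm X = Gm (Pm X).
Proof.
apply/matrixP => i j; rewrite [RHS]mxE [LHS]mxE.
case: (ord7P i) => [->|[->|[->|[->|[->|[->|->]]]]]];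
  case: (ord7P j) => [->|[->|[->|[->|[->|[->|->]]]]]];
  rewrite /gent /= ?mxE /pent /=; lra.
Qed.

Lemma in_g2_Gm (R : rcfType) (X : 'M[R]_7) : in_g2 (Gm X).
Proof. by split; [exact: g2_Gm_skew | exact: g2_Gm_der]. Qed.

Lemma in_g2_Pm (R : rcfType) (X : 'M[R]_7) : in_g2 (Pm X).
Proof. by rewrite Pm_Gm; exact: in_g2_Gm. Qed.

Lemma col0E (R : rcfType) (X : 'M[R]_7) (i : 'I_7) : (X *m oct_i) i 0 = X i 0.
Proof.
rewrite mxE sum7 /oct_i !mxE /=.
have -> : (0 : 'I_7) = o0 by apply: val_inj.
case: (ord7P i) => [->|[->|[->|[->|[->|[->|->]]]]]] /=; 
  rewrite ?mulr0n ?mulr1n ?mulr0 ?mulr1 ?addr0 ?add0r //.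
Qed.

Lemma entry_eq (R : rcfType) (A B : 'M[R]_7) (i j : 'I_7) : A = B -> A i j = B i j.
Proof. by move=> ->. Qed.

Lemma in_p_Pm (R : rcfType) (X : 'M[R]_7) : in_p (Pm X).
Proof.
split; first exact: in_g2_Pm.
move=> W [gW cW]; have HW := g2_char gW.
have z0 : (0 : 'I_7) = o0 by apply: val_inj.
have c i : W i o0 = 0 by rewrite -z0 -col0E cW mxE.
have h1 := entry_eq o1 o0 HW; have h2 := entry_eq o2 o0 HW.
have h3 := entry_eq o3 o0 HW; have h4 := entry_eq o4 o0 HW.
have h5 := entry_eq o5 o0 HW; have h6 := entry_eq o6 o0 HW.
rewrite mxE /gent /= c in h1.
rewrite mxE /gent /= c in h2.
rewrite mxE /gent /= c in h3.
rewrite mxE /gent /= c in h4.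
rewrite mxE /gent /= c in h5.
rewrite mxE /gent /= c in h6.
have r1 : W o5 o4 = W o6 o3 by lra.
have r2 : W o5 o3 = - W o6 o4 by lra.
have r3 : W o5 o2 = W o6 o1 by lra.
have r4 : W o5 o1 = - W o6 o2 by lra.
rewrite /ip0 {1}HW /mxtrace sum7 !mxE !sum7 !mxE /gent /pent /=.
rewrite r1 r2 r3 r4 !c; ring.
Qed.

Lemma skew_tr0 (R : rcfType) (D : 'M[R]_7) : D^T = - D -> \tr (D *m D) = 0 -> D = 0.
Proof.
move=> H H0; have sk := skew_entry H.
have E : \sum_i \sum_j D i j ^+ 2 = - \tr (D *m D).
  rewrite /mxtrace -sumrN; apply: eq_bigr => i _.
  rewrite mxE -sumrN; apply: eq_bigr => j _.
  by rewrite (sk j i) mulrN opprK expr2.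
rewrite H0 oppr0 in E.
apply/matrixP => i j; rewrite mxE.
have := psumr_eq0P (fun i _ => sumr_ge0 _ (fun j _ => sqr_ge0 (D i j))) E.
move=> /(_ i isT) Ei.
have := psumr_eq0P (fun j _ => sqr_ge0 (D i j)) Ei.
by move=> /(_ j isT) /eqP; rewrite sqrf_eq0 => /eqP.
Qed.

Lemma k_part (R : rcfType) (Z : 'M[R]_7) : in_g2 Z -> in_k (Z - Pm Z).
Proof.
move=> gZ; split; first exact: in_g2_sub gZ (in_g2_Pm Z).
have sk := skew_entry gZ.1.
apply/matrixP => i j; rewrite (ord1E j) col0E !mxE.
have -> : (0 : 'I_7) = o0 by apply: val_inj.
have s00 := sk o0 o0.
case: (ord7P i) => [->|[->|[->|[->|[->|[->|->]]]]]]; rewrite /pent /=; lra.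
Qed.

Lemma p_char (R : rcfType) (X : 'M[R]_7) : in_p X -> X = Pm X.
Proof.
move=> [gX pX].
have kD := k_part gX.
have h1 := pX _ kD.
have h2 := (in_p_Pm X).2 _ kD.
have gD := kD.1.
apply/eqP; rewrite -subr_eq0; apply/eqP; apply: skew_tr0; first exact: gD.1.
move: h1 h2; rewrite /ip0 => h1 h2.
rewrite mulmxBl raddfB /=; lra.
Qed.


Lemma sq3 (R : rcfType) (x y z : R) : x * x + y * y + z * z = 0 ->
  x = 0 /\ y = 0 /\ z = 0.
Proof. move=> h; split; [nra | split; nra]. Qed.

Lemma alg2 (R : rcfType) (a12 a34 a56 a13 a24 a14 a23 a15 a26 a16 a25 a35 a46 a36 a45 : R) :
  a12 - a34 / 2 + a56 / 2 = 0 ->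
  - (a12 / 2) + a34 + a56 / 2 = 0 ->
  a12 / 2 + a34 / 2 + a56 = 0 ->
  a13 + a24 = 0 -> a14 - a23 = 0 -> a15 - a26 = 0 -> a16 + a25 = 0 ->
  a35 - a46 = 0 -> a36 + a45 = 0 ->
  a12 * a34 - a13 * a24 + a14 * a23 = 0 ->
  a12 * a56 - a15 * a26 + a16 * a25 = 0 ->
  a34 * a56 - a35 * a46 + a36 * a45 = 0 ->
  [/\ a12 = 0, a34 = 0, a56 = 0, a13 = 0 & a24 = 0] /\
  [/\ a14 = 0, a23 = 0, a15 = 0, a26 = 0 & a16 = 0] /\
  [/\ a25 = 0, a35 = 0, a46 = 0, a36 = 0 & a45 = 0].
Proof.
move=> E1 E2 E3 F1 F2 F3 F4 F5 F6 P1 P2 P3.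
have e34 : a34 = a12 by lra.
have e56 : a56 = - a12 by lra.
have e24 : a24 = - a13 by lra.
have e23 : a23 = a14 by lra.
have e26 : a26 = a15 by lra.
have e25 : a25 = - a16 by lra.
have e46 : a46 = a35 by lra.
have e45 : a45 = - a36 by lra.
rewrite e34 e56 e24 e23 e26 e25 e46 e45 in P1 P2 P3 *.
have [z12 [z13 z14]] : a12 = 0 /\ a13 = 0 /\ a14 = 0 by apply: sq3; rewrite -P1; ring.
have [_ [z15 z16]] : a12 = 0 /\ a15 = 0 /\ a16 = 0 by apply: sq3; rewrite -(oppr0 R) -P2; ring.
have [_ [z35 z36]] : a12 = 0 /\ a35 = 0 /\ a36 = 0 by apply: sq3; rewrite -(oppr0 R) -P3; ring.
rewrite z12 z13 z14 z15 z16 z35 z36 !oppr0; by split; split.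
Qed.

Definition pl (R : rcfType) (X Y : 'M[R]_7) (i j : 'I_7) : R :=
  Y i o0 * X j o0 - Y j o0 * X i o0.

Lemma lie_Pm_zero (R : rcfType) (X Y : 'M[R]_7) :
  lie (Pm X) (Pm Y) = Pm (lie (Pm X) (Pm Y)) -> lie (Pm X) (Pm Y) = 0.
Proof.
move=> H.
have e12 := entry_eq o1 o2 H.
rewrite /lie !mxE /pent /= ?mxE ?sum7 ?mxE /pent /= in e12.
have e34 := entry_eq o3 o4 H.
rewrite /lie !mxE /pent /= ?mxE ?sum7 ?mxE /pent /= in e34.
have e56 := entry_eq o5 o6 H.
rewrite /lie !mxE /pent /= ?mxE ?sum7 ?mxE /pent /= in e56.
have e13 := entry_eq o1 o3 H.
rewrite /lie !mxE /pent /= ?mxE ?sum7 ?mxE /pent /= in e13.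
have e14 := entry_eq o1 o4 H.
rewrite /lie !mxE /pent /= ?mxE ?sum7 ?mxE /pent /= in e14.
have e15 := entry_eq o1 o5 H.
rewrite /lie !mxE /pent /= ?mxE ?sum7 ?mxE /pent /= in e15.
have e16 := entry_eq o1 o6 H.
rewrite /lie !mxE /pent /= ?mxE ?sum7 ?mxE /pent /= in e16.
have e35 := entry_eq o3 o5 H.
rewrite /lie !mxE /pent /= ?mxE ?sum7 ?mxE /pent /= in e35.
have e36 := entry_eq o3 o6 H.
rewrite /lie !mxE /pent /= ?mxE ?sum7 ?mxE /pent /= in e36.
have E1 : pl X Y o1 o2 - pl X Y o3 o4 / 2 + pl X Y o5 o6 / 2 = 0 by rewrite /pl; lra.
have E2 : - (pl X Y o1 o2 / 2) + pl X Y o3 o4 + pl X Y o5 o6 / 2 = 0 by rewrite /pl; lra.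
have E3 : pl X Y o1 o2 / 2 + pl X Y o3 o4 / 2 + pl X Y o5 o6 = 0 by rewrite /pl; lra.
have F1 : pl X Y o1 o3 + pl X Y o2 o4 = 0 by rewrite /pl; lra.
have F2 : pl X Y o1 o4 - pl X Y o2 o3 = 0 by rewrite /pl; lra.
have F3 : pl X Y o1 o5 - pl X Y o2 o6 = 0 by rewrite /pl; lra.
have F4 : pl X Y o1 o6 + pl X Y o2 o5 = 0 by rewrite /pl; lra.
have F5 : pl X Y o3 o5 - pl X Y o4 o6 = 0 by rewrite /pl; lra.
have F6 : pl X Y o3 o6 + pl X Y o4 o5 = 0 by rewrite /pl; lra.
have P1 : pl X Y o1 o2 * pl X Y o3 o4 - pl X Y o1 o3 * pl X Y o2 o4 + pl X Y o1 o4 * pl X Y o2 o3 = 0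
  by rewrite /pl; ring.
have P2 : pl X Y o1 o2 * pl X Y o5 o6 - pl X Y o1 o5 * pl X Y o2 o6 + pl X Y o1 o6 * pl X Y o2 o5 = 0
  by rewrite /pl; ring.
have P3 : pl X Y o3 o4 * pl X Y o5 o6 - pl X Y o3 o5 * pl X Y o4 o6 + pl X Y o3 o6 * pl X Y o4 o5 = 0
  by rewrite /pl; ring.
have [[z12 z34 z56 z13 z24] [[z14 z23 z15 z26 z16] [z25 z35 z46 z36 z45]]] :=
  alg2 E1 E2 E3 F1 F2 F3 F4 F5 F6 P1 P2 P3.
rewrite /pl in z12 z34 z56 z13 z24 z14 z23 z15 z26 z16 z25 z35 z46 z36 z45.
clear H E1 E2 E3 F1 F2 F3 F4 F5 F6 P1 P2 P3 e12 e34 e56 e13 e14 e15 e16 e35 e36.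
apply/matrixP => i j; rewrite /lie !mxE !sum7 !mxE.
case: (ord7P i) => [->|[->|[->|[->|[->|[->|->]]]]]];
  case: (ord7P j) => [->|[->|[->|[->|[->|[->|->]]]]]]; rewrite /pent /=; lra.
Qed.

Unset Implicit Arguments.


Theorem mainTheorem7 (R : rcfType) (X Y : 'M[R]_7) :
  in_p X -> in_p Y -> (lie X Y = 0 <-> kcomp_zero (lie X Y)).
Proof.
move=> pX pY; split.
- move=> -> A B kA pB E.
  have eB : B = - A by apply/eqP; rewrite -addr_eq0 addrC -E.
  have z0 : (0 : 'I_7) = o0 by apply: val_inj.
  have cB i : B i o0 = 0.
    by rewrite eB mxE -z0 -col0E kA.2 mxE oppr0.
  have B0 : B = 0.
    rewrite (p_char pB); apply/matrixP => i j; rewrite !mxE.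
    case: (ord7P i) => [->|[->|[->|[->|[->|[->|->]]]]]];
    case: (ord7P j) => [->|[->|[->|[->|[->|[->|->]]]]]]; rewrite /pent /= ?cB; lra.
  by move: E; rewrite B0 addr0.
- move=> K.
  have gL := in_g2_lie pX.1 pY.1.
  have := K _ _ (k_part gL) (in_p_Pm (lie X Y)) (esym (subrK _ _)).
  move=> /eqP; rewrite subr_eq0 => /eqP HL.
  have eX := p_char pX; have eY := p_char pY.
  rewrite eX eY in HL *.
  exact: lie_Pm_zero.
Qed.
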